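(* Let $\Gamma$ be a group and $n \ge 0$ an integer. Then the quotient $P\mathcal{S}(\Gamma)/\overline{D^n}(P\mathcal{S}(\Gamma))$ is canonically isomorphic to $\Gamma/D^n(\Gamma)$.
   Context: For a group $\Gamma$, let $\mathcal{S}$ be the family of all normal subgroups $N$ of $\Gamma$ with $\Gamma/N$ soluble; it is directed (the intersection of two members contains a member). Let $\mathcal{C}\mathcal{S}(\Gamma)=\bigcap_{N\in\mathcal{S}}N$. The group $\Gamma/\mathcal{C}\mathcal{S}(\Gamma)$ carries the Hausdorff group topology for which the images of the members of $\mathcal{S}$ form a basis of neighbourhoods of the identity; its completion (with respect to the left uniformity) is the true prosoluble completion $P\mathcal{S}(\Gamma)$, a complete Hausdorff topological group, which can be identified with the inverse limit $\varprojlim_{N\in\mathcal{S}}\Gamma/N$. There is a canonical homomorphism $\Gamma\to P\mathcal{S}(\Gamma)$ with dense image. $D^n(\Gamma)$ denotes the $n$-th term of the derived series ($D^0(\Gamma)=\Gamma$, $D^{n+1}(\Gamma)=[D^n(\Gamma),D^n(\Gamma)]$). For a topological group $G$, the topological derived series is defined by $\overline{D^0}(G)=G$ and $\overline{D^{n+1}}(G)$ = the closure of the subgroup generated by the commutators $a^{-1}b^{-1}ab$ with $a,b\in\overline{D^n}(G)$. *)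

(* Defs.v *)
Record group := Group {
  car :> Type;
  gmul : car -> car -> car;
  ginv : car -> car;
  gone : car;
  gmulA : forall x y z, gmul x (gmul y z) = gmul (gmul x y) z;
  gmul1 : forall x, gmul gone x = x;
  gmulV : forall x, gmul (ginv x) x = gone }.

Section GroupDefs.
Variable G : group.
Notation gset := (car G -> Prop).

Definition subset (A B : gset) : Prop := forall x, A x -> B x.

Definition is_subgroup (H : gset) : Prop :=
  H (gone G) /\ (forall x y, H x -> H y -> H (gmul G x y)) /\
  (forall x, H x -> H (ginv G x)).

Definition is_normal (N : gset) : Prop :=
  is_subgroup N /\ forall g h, N h -> N (gmul G (ginv G g) (gmul G h g)).

Definition generated (A : gset) : gset :=
  fun x => forall H, is_subgroup H -> subset A H -> H x.

Definition comm (a b : car G) : car G :=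
  gmul G (gmul G (ginv G a) (ginv G b)) (gmul G a b).

Fixpoint derived (n : nat) : gset :=
  match n with
  | 0 => fun _ => True
  | S k => generated (fun x => exists a b, derived k a /\ derived k b /\ x = comm a b)
  end.

(* The family S: normal subgroups N with G/N soluble, i.e. D^k(G) <= N for some k. *)
Definition solQ (N : gset) : Prop :=
  is_normal N /\ exists k, subset (derived k) N.

Definition coset (g : car G) (N : gset) : gset := fun y => N (gmul G (ginv G g) y).

(* Elements of the inverse limit  lim_{N in S} G/N : compatible families of cosets,
   represented as functions N |-> coset of N (values off S are irrelevant). *)
Definition PSel := gset -> gset.

Definition is_PS (x : PSel) : Prop :=
  (forall N, solQ N -> exists g, x N = coset g N) /\
  (forall N M, solQ N -> solQ M -> subset N M -> subset (x N) (x M)).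

Definition PS_eq (x y : PSel) : Prop := forall N, solQ N -> x N = y N.

Definition PS_mul (x y : PSel) : PSel :=
  fun N z => exists a b, x N a /\ y N b /\ z = gmul G a b.
Definition PS_inv (x : PSel) : PSel :=
  fun N z => exists a, x N a /\ z = ginv G a.

Definition PS_iota (g : car G) : PSel := fun N => coset g N.

Definition PS_one : PSel := PS_iota (gone G).

(* subgroups of PS(G) (saturated for equality in the inverse limit) *)
Definition PS_subgroup (H : PSel -> Prop) : Prop :=
  (forall x, H x -> is_PS x) /\
  (forall x y, H x -> is_PS y -> PS_eq x y -> H y) /\
  H PS_one /\
  (forall x y, H x -> H y -> H (PS_mul x y)) /\
  (forall x, H x -> H (PS_inv x)).

Definition PS_generated (A : PSel -> Prop) : PSel -> Prop :=
  fun x => forall H, PS_subgroup H -> (forall a, A a -> H a) -> H x.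

Definition PS_comm (a b : PSel) : PSel :=
  PS_mul (PS_mul (PS_inv a) (PS_inv b)) (PS_mul a b).

(* Closure in the topology of PS(G): the basic neighbourhoods of x are
   x K_N = { y | y N = x N } for N in S (K_N = kernel of PS(G) -> G/N). *)
Definition PS_closure (A : PSel -> Prop) : PSel -> Prop :=
  fun x => is_PS x /\ forall N, solQ N -> exists a, A a /\ a N = x N.

Fixpoint PS_tderived (n : nat) : PSel -> Prop :=
  match n with
  | 0 => is_PS
  | S k => PS_closure (PS_generated
             (fun x => exists a b, PS_tderived k a /\ PS_tderived k b /\ x = PS_comm a b))
  end.

End GroupDefs.

(* Main.v *)
Require Import Defs.
From Stdlib Require Import FunctionalExtensionality PropExtensionality Arith Lia.

Local Notation "x ** y" := (gmul _ x y) (at level 40, left associativity).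

Lemma pred_ext {T : Type} (A B : T -> Prop) : (forall y, A y <-> B y) -> A = B.
Proof. intro H; apply functional_extensionality; intro y; apply propositional_extensionality; auto. Qed.

Lemma mulKg (G : group) (x y : G) : ginv G x ** (x ** y) = y.
Proof. rewrite gmulA, gmulV, gmul1; reflexivity. Qed.

Lemma mulgV (G : group) (x : G) : x ** ginv G x = gone G.
Proof.
  assert (He : forall e : G, e ** e = e -> e = gone G).
  { intros e He. rewrite <- (gmulV G e). rewrite <- He at 3. rewrite mulKg. reflexivity. }
  apply He. rewrite <- gmulA. rewrite mulKg. reflexivity.
Qed.

Lemma mulg1 (G : group) (x : G) : x ** gone G = x.
Proof. rewrite <- (gmulV G x), gmulA, mulgV, gmul1; reflexivity. Qed.

Lemma mulVKg (G : group) (x y : G) : x ** (ginv G x ** y) = y.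
Proof. rewrite gmulA, mulgV, gmul1; reflexivity. Qed.

Lemma inv_uniq (G : group) (x y : G) : x ** y = gone G -> ginv G x = y.
Proof. intro H. rewrite <- (mulg1 G (ginv G x)), <- H, mulKg. reflexivity. Qed.

Lemma invgK (G : group) (x : G) : ginv G (ginv G x) = x.
Proof. apply inv_uniq, gmulV. Qed.

Lemma invgM (G : group) (x y : G) : ginv G (x ** y) = ginv G y ** ginv G x.
Proof. apply inv_uniq. rewrite <- gmulA, mulVKg, mulgV. reflexivity. Qed.

Ltac gsimpl := repeat progress (rewrite ?invgM, ?invgK; rewrite <- ?gmulA;
  rewrite ?mulKg, ?mulVKg, ?gmul1, ?mulg1, ?gmulV, ?mulgV).

Definition cj (G : group) (g h : G) : G := ginv G g ** (h ** g).

Lemma cjM (G : group) (g x y : G) : cj G g (x ** y) = cj G g x ** cj G g y.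
Proof. unfold cj; gsimpl; reflexivity. Qed.

Lemma cjV (G : group) (g x : G) : cj G g (ginv G x) = ginv G (cj G g x).
Proof. unfold cj; gsimpl; reflexivity. Qed.

Lemma Nrw (G : group) (N : G -> Prop) (x y : G) : N x -> x = y -> N y.
Proof. intros H <-; exact H. Qed.

Lemma coset_self (G : group) N (c : G) : is_subgroup G N -> coset G c N c.
Proof. intros [H1 _]. unfold coset. rewrite gmulV. exact H1. Qed.

Lemma mul_coset (G : group) N (a b : G) : is_normal G N ->
  (fun z => exists u v, coset G a N u /\ coset G b N v /\ z = u ** v) = coset G (a ** b) N.
Proof.
  intros [[H1 [HM HI]] HN]. apply pred_ext; intro z; unfold coset; split.
  - intros [u [v [Hu [Hv ->]]]].
    apply (Nrw G N (cj G b (ginv G a ** u) ** (ginv G b ** v))).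
    + apply HM; [apply HN; exact Hu | exact Hv].
    + unfold cj; gsimpl; reflexivity.
  - intros Hz. exists a, (ginv G a ** z). split; [rewrite gmulV; exact H1|].
    split; [|rewrite mulVKg; reflexivity].
    apply (Nrw G N _ _ Hz). gsimpl; reflexivity.
Qed.

Lemma inv_coset (G : group) N (a : G) : is_normal G N ->
  (fun z => exists u, coset G a N u /\ z = ginv G u) = coset G (ginv G a) N.
Proof.
  intros [[H1 [HM HI]] HN]. apply pred_ext; intro z; unfold coset; split.
  - intros [u [Hu ->]].
    apply (Nrw G N (cj G (ginv G a) (ginv G (ginv G a ** u)))).
    + apply HN, HI, Hu.
    + unfold cj; gsimpl; reflexivity.
  - intros Hz. exists (ginv G z). split; [|rewrite invgK; reflexivity].
    apply (Nrw G N (ginv G (cj G a (ginv G (ginv G a) ** z)))).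
    + apply HI, HN, Hz.
    + unfold cj; gsimpl; reflexivity.
Qed.

Lemma coset_eq (G : group) N (c c' : G) : is_subgroup G N -> coset G c' N c ->
  coset G c N = coset G c' N.
Proof.
  intros [H1 [HM HI]] Hc. unfold coset in *. apply pred_ext; intro y; split; intro Hy.
  - apply (Nrw G N _ _ (HM _ _ Hc Hy)). gsimpl; reflexivity.
  - apply (Nrw G N _ _ (HM _ _ (HI _ Hc) Hy)). gsimpl; reflexivity.
Qed.

Lemma PS_mul_coset (G : group) (x y : PSel G) N a b : is_normal G N ->
  x N = coset G a N -> y N = coset G b N -> PS_mul G x y N = coset G (a ** b) N.
Proof. intros HN Hx Hy. unfold PS_mul. rewrite Hx, Hy. apply mul_coset, HN. Qed.

Lemma PS_inv_coset (G : group) (x : PSel G) N a : is_normal G N ->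
  x N = coset G a N -> PS_inv G x N = coset G (ginv G a) N.
Proof. intros HN Hx. unfold PS_inv. rewrite Hx. apply inv_coset, HN. Qed.

Lemma PS_comm_coset (G : group) (x y : PSel G) N a b : is_normal G N ->
  x N = coset G a N -> y N = coset G b N -> PS_comm G x y N = coset G (comm G a b) N.
Proof.
  intros HN Hx Hy. unfold PS_comm, comm.
  apply PS_mul_coset; auto; apply PS_mul_coset; auto; apply PS_inv_coset; auto.
Qed.

Lemma gen_sub (G : group) A : is_subgroup G (generated G A).
Proof.
  split; [|split].
  - intros H [H1 _] _; exact H1.
  - intros x y Hx Hy H HH HA. destruct HH as [H1 [HM HI]].
    apply HM; [apply Hx | apply Hy]; auto; split; auto.
  - intros x Hx H HH HA. destruct HH as [H1 [HM HI]].
    apply HI; apply Hx; auto; split; auto.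
Qed.

Lemma gen_incl (G : group) (A : G -> Prop) x : A x -> generated G A x.
Proof. intros Hx H _ HA; apply HA, Hx. Qed.

Lemma derived_sub (G : group) n : is_subgroup G (derived G n).
Proof.
  destruct n as [|k]; simpl.
  - split; [exact I | split; intros; exact I].
  - apply gen_sub.
Qed.

Lemma derived_cj (G : group) n : forall g h, derived G n h -> derived G n (cj G g h).
Proof.
  induction n as [|k IH]; simpl; intros g h Hh; [exact I|].
  intros K HK HA. destruct HK as [K1 [KM KI]].
  apply (Hh (fun x => K (cj G g x))).
  - split; [|split].
    + unfold cj; gsimpl; exact K1.
    + intros x y Hx Hy. rewrite cjM. apply KM; auto.
    + intros x Hx. rewrite cjV. apply KI; auto.
  - intros x [a [b [Ha [Hb ->]]]]. apply HA.
    exists (cj G g a), (cj G g b). split; [apply IH, Ha|]. split; [apply IH, Hb|].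
    unfold comm. rewrite !cjM, !cjV. reflexivity.
Qed.

Lemma derived_normal (G : group) n : is_normal G (derived G n).
Proof. split; [apply derived_sub|]. intros g h Hh. apply (derived_cj G n g h Hh). Qed.

Lemma derived_step (G : group) m : subset G (derived G (S m)) (derived G m).
Proof.
  intros x Hx. apply Hx; [apply derived_sub|].
  intros y [a [b [Ha [Hb ->]]]]. destruct (derived_sub G m) as [H1 [HM HI]].
  unfold comm. apply HM; apply HM; auto.
Qed.

Lemma derived_mono (G : group) k n : subset G (derived G (k + n)) (derived G n).
Proof.
  induction k as [|k IH]; simpl; intros x Hx; auto.
  apply IH, derived_step, Hx.
Qed.

Lemma solQ_derived (G : group) n : solQ G (derived G n).
Proof. split; [apply derived_normal|]. exists n; intros x Hx; exact Hx. Qed.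

Lemma is_PS_iota (G : group) g : is_PS G (PS_iota G g).
Proof.
  split.
  - intros N _. exists g; reflexivity.
  - intros N M _ _ HNM y Hy. unfold PS_iota, coset in *. apply HNM, Hy.
Qed.

Lemma PS_mul_is_PS (G : group) x y : is_PS G x -> is_PS G y -> is_PS G (PS_mul G x y).
Proof.
  intros [Hx1 Hx2] [Hy1 Hy2]. split.
  - intros N HN. destruct (Hx1 N HN) as [a Ha]. destruct (Hy1 N HN) as [b Hb].
    exists (a ** b). apply PS_mul_coset; auto. apply HN.
  - intros N M HN HM HNM z [u [v [Hu [Hv ->]]]].
    exists u, v. split; [apply (Hx2 N M); auto|]. split; [apply (Hy2 N M); auto|reflexivity].
Qed.

Lemma PS_inv_is_PS (G : group) x : is_PS G x -> is_PS G (PS_inv G x).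
Proof.
  intros [Hx1 Hx2]. split.
  - intros N HN. destruct (Hx1 N HN) as [a Ha].
    exists (ginv G a). apply PS_inv_coset; auto. apply HN.
  - intros N M HN HM HNM z [u [Hu ->]].
    exists u. split; [apply (Hx2 N M); auto|reflexivity].
Qed.

Definition Gen (G : group) k := PS_generated G
  (fun x => exists a b, PS_tderived G k a /\ PS_tderived G k b /\ x = PS_comm G a b).

Lemma Qp (G : group) k : (forall h, derived G k h -> PS_tderived G k (PS_iota G h)) ->
  forall h, derived G (S k) h -> Gen G k (PS_iota G h).
Proof.
  intros IH h Hh H HS HA.
  destruct HS as [HPS [Hsat [H1 [HM HI]]]].
  apply (Hh (fun h => H (PS_iota G h))).
  - split; [|split].
    + exact H1.
    + intros x y Hx Hy. apply (Hsat (PS_mul G (PS_iota G x) (PS_iota G y))); auto.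
      * apply is_PS_iota.
      * intros N HN. apply PS_mul_coset; auto. apply HN.
    + intros x Hx. apply (Hsat (PS_inv G (PS_iota G x))); auto.
      * apply is_PS_iota.
      * intros N HN. apply PS_inv_coset; auto. apply HN.
  - intros x [a [b [Ha [Hb ->]]]].
    apply (Hsat (PS_comm G (PS_iota G a) (PS_iota G b))).
    + apply HA. exists (PS_iota G a), (PS_iota G b). auto.
    + apply is_PS_iota.
    + intros N HN. apply PS_comm_coset; auto. apply HN.
Qed.

Lemma Qlem (G : group) n : forall h, derived G n h -> PS_tderived G n (PS_iota G h).
Proof.
  induction n as [|k IH]; intros h Hh.
  - apply is_PS_iota.
  - split; [apply is_PS_iota|]. intros N HN. exists (PS_iota G h).
    split; [apply Qp; auto | reflexivity].
Qed.

Lemma tderived_is_PS (G : group) n x : PS_tderived G n x -> is_PS G x.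
Proof. destruct n; simpl; [auto | intros [H _]; exact H]. Qed.

Lemma Clem (G : group) n : forall x, PS_tderived G n x ->
  forall N, solQ G N -> exists h, derived G n h /\ x N = coset G h N.
Proof.
  induction n as [|k IH]; intros x Hx N HN.
  - destruct (proj1 Hx N HN) as [h Hh]. exists h; split; [exact I | exact Hh].
  - destruct Hx as [HxPS Hcl]. destruct (Hcl N HN) as [a [Ha Hax]].
    set (Hp := fun a : PSel G => is_PS G a /\ forall N, solQ G N ->
          exists h, derived G (S k) h /\ a N = coset G h N).
    assert (HpA : Hp a).
    { apply Ha.
      - split; [|split; [|split; [|split]]].
        + intros y [Hy _]; exact Hy.
        + intros y z [Hy1 Hy2] Hz Heq. split; auto.
          intros M HM. destruct (Hy2 M HM) as [h [Hh1 Hh2]]. exists h. split; auto.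
          rewrite <- Heq; auto.
        + split; [apply is_PS_iota|]. intros M HM. exists (gone G).
          split; [apply (derived_sub G (S k)) | reflexivity].
        + intros y z [Hy1 Hy2] [Hz1 Hz2]. split; [apply PS_mul_is_PS; auto|].
          intros M HM. destruct (Hy2 M HM) as [u [Hu1 Hu2]].
          destruct (Hz2 M HM) as [v [Hv1 Hv2]]. exists (u ** v).
          split; [apply (derived_sub G (S k)); auto|]. apply PS_mul_coset; auto. apply HM.
        + intros y [Hy1 Hy2]. split; [apply PS_inv_is_PS; auto|].
          intros M HM. destruct (Hy2 M HM) as [u [Hu1 Hu2]]. exists (ginv G u).
          split; [apply (derived_sub G (S k)); auto|]. apply PS_inv_coset; auto. apply HM.
      - intros y [b [c [Hb [Hc ->]]]]. split.
        + unfold PS_comm. apply tderived_is_PS in Hb. apply tderived_is_PS in Hc.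
          apply PS_mul_is_PS; apply PS_mul_is_PS; auto; apply PS_inv_is_PS; auto.
        + intros M HM. destruct (IH b Hb M HM) as [u [Hu1 Hu2]].
          destruct (IH c Hc M HM) as [v [Hv1 Hv2]]. exists (comm G u v).
          split; [apply gen_incl; exists u, v; auto|]. apply PS_comm_coset; auto. apply HM. }
    destruct HpA as [_ Hp2]. destruct (Hp2 N HN) as [h [Hh1 Hh2]]. exists h.
    split; auto. rewrite <- Hax; exact Hh2.
Qed.

Theorem mainTheorem1 (G : group) (n : nat) :
  (forall x : PSel G, is_PS G x ->
     exists g : car G, PS_tderived G n (PS_mul G (PS_inv G (PS_iota G g)) x)) /\
  (forall g : car G, PS_tderived G n (PS_iota G g) <-> derived G n g).
Proof.
  split.
  - intros x Hx. pose proof (Hx' := Hx). destruct Hx' as [Hx1 Hx2].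
    destruct (Hx1 _ (solQ_derived G n)) as [g Hg]. exists g.
    assert (HyPS : is_PS G (PS_mul G (PS_inv G (PS_iota G g)) x)).
    { apply PS_mul_is_PS; auto. apply PS_inv_is_PS, is_PS_iota. }
    destruct n as [|k]; [exact HyPS|].
    split; [exact HyPS|]. intros N HN.
    pose proof (HN' := HN). destruct HN' as [HNn [m Hm]].
    set (M := derived G (m + S k)).
    assert (HMs : solQ G M) by apply solQ_derived.
    destruct (Hx1 M HMs) as [c Hc].
    assert (HcM : x M c) by (rewrite Hc; apply coset_self, derived_sub).
    assert (HcN0 : x (derived G (S k)) c).
    { apply (Hx2 M); auto. apply solQ_derived. apply derived_mono. }
    rewrite Hg in HcN0.
    assert (HcN : x N c).
    { apply (Hx2 M); auto. intros z Hz. apply Hm.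
      unfold M in Hz; rewrite Nat.add_comm in Hz. apply (derived_mono G (S k) m), Hz. }
    destruct (Hx1 N HN) as [c' Hc'].
    assert (HxN : x N = coset G c N).
    { rewrite Hc'. symmetry. apply coset_eq; [apply HNn|]. rewrite <- Hc'; exact HcN. }
    exists (PS_iota G (ginv G g ** c)). split.
    + apply Qp; [apply Qlem|]. exact HcN0.
    + symmetry. apply PS_mul_coset; auto. apply PS_inv_coset; auto; reflexivity.
  - intro g. split.
    + intro H. destruct (Clem G n _ H _ (solQ_derived G n)) as [h [Hh1 Hh2]].
      pose proof (coset_self G (derived G n) g (derived_sub G n)) as Hs.
      unfold PS_iota in Hh2. rewrite Hh2 in Hs. unfold coset in Hs.
      destruct (derived_sub G n) as [_ [HM _]].
      apply (Nrw G _ _ _ (HM _ _ Hh1 Hs)). apply mulVKg.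
    + apply Qlem.
Qed.
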